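(* Let $u$ be the solution of the Cauchy problem in the context. Then for every $t>0$, $u(\cdot,t)$ is convex on $[0,1]$. Moreover there exist constants $c>0$ and $\mu\in\mathbb{R}$ such that $0\le\partial^2_{xx}u(x,t)\le c\,e^{\mu t}$ for all $x\in[0,1]$ and $t>0$.
   Context: Constants: $f_0>0$, $f_1\ge0$ with $\sigma=f_0-f_1>0$; $\lambda_0,\lambda_1\ge0$; $\gamma_0,\gamma_1\in(0,1]$. With $\mathcal{J}_0u(x,t)=u(x+\gamma_0(1-x),t)-u(x,t)$ and $\mathcal{J}_1u(x,t)=u(x-\gamma_1x,t)-u(x,t)$, $u$ is the unique (mild) solution, which is $C^\infty$ on $[0,1]\times[0,\infty)$, of \[ \partial_tu+\sigma(1-x)x\,\partial_xu=\lambda_0f_0\mathcal{J}_0u+\lambda_1f_1\mathcal{J}_1u\ (0\le x\le1,\ t>0),\quad u(x,0)=x. \] *)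

(* Defs.v *)
From Stdlib Require Import Reals List.
From Coquelicot Require Import Coquelicot.
Open Scope R_scope.

(* Iterated partial derivatives of a function of (x,t): the list gives the
   order of differentiation, [true] = d/dx, [false] = d/dt (innermost last). *)
Fixpoint pderiv (l : list bool) (f : R -> R -> R) : R -> R -> R :=
  match l with
  | nil => f
  | cons b l' =>
      if b then (fun x t => Derive (fun y => pderiv l' f y t) x)
      else (fun x t => Derive (fun s => pderiv l' f x s) t)
  end.

Definition smooth2 (f : R -> R -> R) : Prop :=
  forall (l : list bool) (x t : R),
    ex_derive (fun y => pderiv l f y t) x /\
    ex_derive (fun s => pderiv l f x s) t /\
    continuous (fun p : R * R => pderiv l f (fst p) (snd p)) (x, t).

Definition J0 (g0 : R) (u : R -> R -> R) (x t : R) : R :=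
  u (x + g0 * (1 - x)) t - u x t.
Definition J1 (g1 : R) (u : R -> R -> R) (x t : R) : R :=
  u (x - g1 * x) t - u x t.

Definition solves_cauchy (f0 f1 l0 l1 g0 g1 : R) (u : R -> R -> R) : Prop :=
  (forall x t, 0 <= x <= 1 -> 0 < t ->
     Derive (fun s => u x s) t
     + (f0 - f1) * (1 - x) * x * Derive (fun y => u y t) x
     = l0 * f0 * J0 g0 u x t + l1 * f1 * J1 g1 u x t) /\
  (forall x, 0 <= x <= 1 -> u x 0 = x).

Definition convex_on01 (g : R -> R) : Prop :=
  forall x y a, 0 <= x <= 1 -> 0 <= y <= 1 -> 0 <= a <= 1 ->
    g (a * x + (1 - a) * y) <= a * g x + (1 - a) * g y.

(* Main.v *)
Require Import Defs.
From Stdlib Require Import Reals Lra Psatz Classical ClassicalEpsilon List.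
From Coquelicot Require Import Coquelicot.
Open Scope R_scope.

Definition mycont1 (f : R -> R) (c : R) : Prop :=
  forall e, 0 < e -> exists d, 0 < d /\ forall y, Rabs (y - c) < d -> Rabs (f y - f c) < e.

Lemma cont1_of f c : continuous f c -> mycont1 f c.
Proof.
  intros H e He.
  destruct (H (ball (f c) (mkposreal e He)) (locally_ball (f c) (mkposreal e He))) as [d Hd].
  exists d. split. apply cond_pos. intros y Hy. apply (Hd y). exact Hy.
Qed.

Lemma c2d_x z x t : continuity_2d_pt z x t -> mycont1 (fun y => z y t) x.
Proof.
  intros H e He. destruct (H (mkposreal e He)) as [d Hd].
  exists d. split. apply cond_pos. intros y Hy. apply Hd. exact Hy.
  unfold Rminus; rewrite Rplus_opp_r, Rabs_R0. apply cond_pos.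
Qed.

Lemma c2d_t z x t : continuity_2d_pt z x t -> mycont1 (fun s => z x s) t.
Proof.
  intros H e He. destruct (H (mkposreal e He)) as [d Hd].
  exists d. split. apply cond_pos. intros y Hy. apply Hd.
  unfold Rminus; rewrite Rplus_opp_r, Rabs_R0. apply cond_pos. exact Hy.
Qed.

Lemma ext_closed f g c : 0 <= c <= 1 -> mycont1 f c -> mycont1 g c ->
  (forall y, 0 < y < 1 -> f y = g y) -> f c = g c.
Proof.
  intros Hc Hf Hg Heq.
  destruct (Req_dec (f c) (g c)) as [E|N]; [exact E|exfalso].
  assert (He : 0 < Rabs (f c - g c) / 2).
  { apply Rdiv_lt_0_compat; [apply Rabs_pos_lt; lra|lra]. }
  destruct (Hf _ He) as [d1 [Hd1 H1]].
  destruct (Hg _ He) as [d2 [Hd2 H2]].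
  set (m := Rmin (Rmin d1 d2) (1/2) / 2).
  assert (Hm1 : 0 < m).
  { unfold m. apply Rdiv_lt_0_compat; [|lra]. repeat apply Rmin_pos; lra. }
  assert (Hm2 : m < d1 /\ m < d2 /\ m <= 1/4).
  { unfold m. pose proof (Rmin_l (Rmin d1 d2) (1/2)). pose proof (Rmin_r (Rmin d1 d2) (1/2)).
    pose proof (Rmin_l d1 d2). pose proof (Rmin_r d1 d2). lra. }
  set (y := if Rle_dec c (1/2) then c + m else c - m).
  assert (Hy : 0 < y < 1 /\ Rabs (y - c) = m).
  { unfold y; destruct (Rle_dec c (1/2)).
    - split; [lra|]. replace (c + m - c) with m by ring. apply Rabs_right; lra.
    - split; [lra|]. replace (c - m - c) with (- m) by ring. rewrite Rabs_Ropp. apply Rabs_right; lra. }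
  destruct Hy as [Hy1 Hy2].
  specialize (H1 y ltac:(lra)). specialize (H2 y ltac:(lra)).
  rewrite (Heq y Hy1) in H1.
  revert H1 H2. unfold Rabs. repeat destruct Rcase_abs; lra.
Qed.

Lemma tube (g : R -> R -> R) c :
  (forall x, 0 <= x <= 1 -> continuity_2d_pt g x c) ->
  (forall x, 0 <= x <= 1 -> 0 < g x c) ->
  exists d, 0 < d /\ forall x s, 0 <= x <= 1 -> Rabs (s - c) < d -> 0 < g x s.
Proof.
  intros Hc Hp.
  assert (Hex : forall x, exists r : posreal, 0 <= x <= 1 ->
     forall x' s, Rabs (x' - x) < r -> Rabs (s - c) < r -> 0 < g x' s).
  { intros x. destruct (classic (0 <= x <= 1)) as [Hx|Hx].
    - destruct (Hc x Hx (mkposreal _ (Hp x Hx))) as [r Hr]. exists r.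
      intros _ x' s h1 h2. specialize (Hr x' s h1 h2). simpl in Hr.
      apply Rabs_def2 in Hr. lra.
    - exists (mkposreal 1 Rlt_0_1). intros; contradiction. }
  set (delta := fun x => proj1_sig (constructive_indefinite_description _ (Hex x))).
  destruct (compactness_value_1d 0 1 delta) as [d Hd].
  exists d. split; [apply cond_pos|]. intros x s Hx Hs.
  destruct (Rlt_dec 0 (g x s)) as [ok|nok]; [exact ok|exfalso].
  apply (Hd x Hx). intros [t0 [Ht0 [H1 H2]]]. apply nok.
  apply (proj2_sig (constructive_indefinite_description _ (Hex t0))); auto.
  fold (delta t0). lra.
Qed.

Lemma deriv_left f c d r : is_derive f c d -> 0 < d -> 0 < r ->
  exists s, c - r < s < c /\ f s < f c.
Proof.
  intros H Hd Hr. apply is_derive_Reals in H.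
  destruct (H d Hd) as [del Hdel].
  set (h := - (Rmin del r / 2)).
  assert (Hh : 0 < Rmin del r) by (apply Rmin_pos; [apply cond_pos|lra]).
  assert (Hh2 : Rmin del r <= del /\ Rmin del r <= r) by (split; [apply Rmin_l|apply Rmin_r]).
  assert (Hneq : h <> 0) by (unfold h; lra).
  assert (Habs : Rabs h < del) by (unfold h; rewrite Rabs_Ropp, Rabs_right; lra).
  specialize (Hdel h Hneq Habs). apply Rabs_def2 in Hdel.
  exists (c + h). split; [unfold h; lra|].
  assert (Hq : 0 < (f (c + h) - f c) / h) by lra.
  assert (E : f (c + h) - f c = ((f (c + h) - f c) / h) * h) by (field; exact Hneq).
  set (q := (f (c + h) - f c) / h) in *.
  assert (q * h < 0) by (unfold h in *; nra). lra.
Qed.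

Lemma deriv_right f c d r : is_derive f c d -> d < 0 -> 0 < r ->
  exists s, c < s < c + r /\ f s < f c.
Proof.
  intros H Hd Hr. apply is_derive_Reals in H.
  destruct (H (-d) ltac:(lra)) as [del Hdel].
  set (h := Rmin del r / 2).
  assert (Hh : 0 < Rmin del r) by (apply Rmin_pos; [apply cond_pos|lra]).
  assert (Hh2 : Rmin del r <= del /\ Rmin del r <= r) by (split; [apply Rmin_l|apply Rmin_r]).
  assert (Hneq : h <> 0) by (unfold h; lra).
  assert (Habs : Rabs h < del) by (unfold h; rewrite Rabs_right; lra).
  specialize (Hdel h Hneq Habs). apply Rabs_def2 in Hdel.
  exists (c + h). split; [unfold h; lra|].
  assert (E : f (c + h) - f c = ((f (c + h) - f c) / h) * h) by (field; exact Hneq).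
  set (q := (f (c + h) - f c) / h) in *.
  assert (q * h < 0) by (unfold h in *; nra). lra.
Qed.

Lemma min_factor f x d : 0 <= x <= 1 -> is_derive f x d ->
  (forall y, 0 <= y <= 1 -> f x <= f y) -> (1 - x) * x * d = 0.
Proof.
  intros Hx H Hm.
  destruct (Req_dec x 0) as [->|N0]; [ring|].
  destruct (Req_dec x 1) as [->|N1]; [ring|].
  destruct (Rtotal_order d 0) as [Hl|[->|Hg]]; [exfalso| ring | exfalso].
  - destruct (deriv_right f x d (1 - x) H Hl ltac:(lra)) as [s [Hs1 Hs2]].
    specialize (Hm s ltac:(lra)). lra.
  - destruct (deriv_left f x d x H Hg ltac:(lra)) as [s [Hs1 Hs2]].
    specialize (Hm s ltac:(lra)). lra.
Qed.

Lemma cont_exp_2d (a b : R) x t : continuity_2d_pt (fun _ s => a * exp (b * s)) x t.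
Proof.
  apply (continuity_1d_2d_pt_comp (fun s => a * exp (b * s)) (fun _ v => v)).
  - cbv beta. apply (proj2 (continuity_pt_filterlim _ _)). apply (ex_derive_continuous (fun s => a * exp (b * s))). auto_derive. auto.
  - apply continuity_2d_pt_id2.
Qed.

Lemma posprin (z : R -> R -> R) (K : R) :
  0 <= K ->
  (forall x t, continuity_2d_pt z x t) ->
  (forall x, 0 <= x <= 1 -> 0 <= z x 0) ->
  (forall x t, 0 <= x <= 1 -> 0 < t -> (forall y, 0 <= y <= 1 -> z x t <= z y t) ->
     z x t < 0 -> exists d, is_derive (fun s => z x s) t d /\ K * z x t <= d) ->
  forall x t, 0 <= x <= 1 -> 0 <= t -> 0 <= z x t.
Proof.
  intros HK Hc H0 Hd x0 t0 Hx0 Ht0.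
  destruct (Rle_lt_dec 0 (z x0 t0)) as [ok|Hneg]; [exact ok|exfalso].
  set (L := K + 1).
  assert (HE : 0 < exp (L * t0)) by apply exp_pos.
  set (eps := - z x0 t0 / (2 * exp (L * t0))).
  assert (Heps : 0 < eps) by (unfold eps; apply Rdiv_lt_0_compat; lra).
  set (y := fun x s => z x s + eps * exp (L * s)).
  assert (Hy0 : y x0 t0 < 0).
  { unfold y. replace (eps * exp (L * t0)) with (- z x0 t0 / 2).
    lra. unfold eps. field. lra. }
  assert (Hyc : forall x t, continuity_2d_pt y x t).
  { intros x t. unfold y. apply continuity_2d_pt_plus; [apply Hc|apply cont_exp_2d]. }
  assert (Hyi : forall x, 0 <= x <= 1 -> 0 < y x 0).
  { intros x Hx. unfold y. rewrite Rmult_0_r, exp_0. specialize (H0 x Hx). lra. }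
  set (S := fun t => 0 <= t <= t0 /\ forall s x, 0 <= s <= t -> 0 <= x <= 1 -> 0 < y x s).
  assert (Hbound : bound S).
  { exists t0. intros t [Ht _]. lra. }
  assert (Hne : exists t, S t).
  { exists 0. split; [lra|]. intros s x Hs Hx. replace s with 0 by lra. auto. }
  destruct (completeness S Hbound Hne) as [ts [Hub Hlub]].
  assert (Hts0 : 0 <= ts).
  { apply Hub. split; [lra|]. intros s x Hs Hx. replace s with 0 by lra. auto. }
  assert (Hts1 : ts <= t0).
  { apply Hlub. intros t [Ht _]. lra. }
  assert (Ha : forall s x, 0 <= s < ts -> 0 <= x <= 1 -> 0 < y x s).
  { intros s x Hs Hx. destruct (Rlt_dec 0 (y x s)) as [ok|nok]; [exact ok|exfalso].
    assert (is_upper_bound S s).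
    { intros t [Ht Hall]. destruct (Rle_dec t s) as [r|r]; [exact r|].
      exfalso. apply nok. apply Hall; lra. }
    specialize (Hlub s H). lra. }
  assert (Hb : forall x, 0 <= x <= 1 -> 0 <= y x ts).
  { intros x Hx. destruct (Req_dec ts 0) as [E|N].
    - rewrite E. left. auto.
    - destruct (Rle_lt_dec 0 (y x ts)) as [ok|nok]; [exact ok|exfalso].
      destruct (c2d_t y x ts (Hyc x ts) (- y x ts) ltac:(lra)) as [d [Hd0 Hd1]].
      set (s := ts - Rmin d ts / 2).
      assert (Hm : 0 < Rmin d ts) by (apply Rmin_pos; lra).
      assert (Hm2 : Rmin d ts <= d /\ Rmin d ts <= ts) by (split; [apply Rmin_l|apply Rmin_r]).
      specialize (Hd1 s). specialize (Ha s x ltac:(unfold s; lra) Hx).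
      assert (Rabs (s - ts) < d).
      { unfold s. replace (ts - Rmin d ts / 2 - ts) with (- (Rmin d ts / 2)) by ring.
        rewrite Rabs_Ropp, Rabs_right; lra. }
      specialize (Hd1 H). apply Rabs_def2 in Hd1. lra. }
  assert (Hc0 : exists xs, 0 <= xs <= 1 /\ y xs ts = 0).
  { apply NNPP. intros Hno.
    assert (Hpos : forall x, 0 <= x <= 1 -> 0 < y x ts).
    { intros x Hx. destruct (Hb x Hx) as [h|h]; [exact h|].
      exfalso. apply Hno. exists x. auto. }
    destruct (tube y ts (fun x _ => Hyc x ts) Hpos) as [d [Hd0 Hd1]].
    destruct (Rle_lt_dec (ts + d / 2) t0) as [Hle|Hlt].
    - assert (S (ts + d / 2)).
      { split; [lra|]. intros s x Hs Hx.
        destruct (Rlt_le_dec s ts) as [h|h]; [apply Ha; lra|].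
        apply Hd1; [exact Hx|]. rewrite Rabs_right; lra. }
      specialize (Hub _ H). lra.
    - assert (0 < y x0 t0).
      { apply Hd1; [exact Hx0|]. rewrite Rabs_right; lra. }
      lra. }
  destruct Hc0 as [xs [Hxs Hys]].
  assert (Htsp : 0 < ts).
  { destruct (Req_dec ts 0) as [E|N]; [|lra]. rewrite E in Hys. specialize (Hyi xs Hxs). lra. }
  assert (HEs : 0 < exp (L * ts)) by apply exp_pos.
  assert (Hmin : forall y', 0 <= y' <= 1 -> z xs ts <= z y' ts).
  { intros y' Hy'. specialize (Hb y' Hy'). unfold y in Hys, Hb. lra. }
  assert (Hzneg : z xs ts < 0).
  { unfold y in Hys. assert (0 < eps * exp (L * ts)) by (apply Rmult_lt_0_compat; lra). lra. }
  destruct (Hd xs ts Hxs Htsp Hmin Hzneg) as [d [Hder Hdle]].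
  assert (Hdy : is_derive (fun s => y xs s) ts (d + eps * (L * exp (L * ts)))).
  { unfold y. apply (is_derive_plus (fun s => z xs s) (fun s => eps * exp (L * s))).
    exact Hder. auto_derive. auto. ring. }
  assert (Hpos : 0 < d + eps * (L * exp (L * ts))).
  { unfold y in Hys. unfold L in *.
    assert (0 < eps * exp ((K + 1) * ts)) by (apply Rmult_lt_0_compat; lra).
    nra. }
  destruct (deriv_left _ _ _ ts Hdy Hpos Htsp) as [s [Hs1 Hs2]].
  specialize (Ha s xs ltac:(lra) Hxs). lra.
Qed.

Lemma Rmult_le_0_l_pos a b : 0 <= a -> b <= 0 -> a * b <= 0.
Proof. intros; nra. Qed.
Lemma ar1 A B sg g0 g1 x m a0 a1 w : 0 <= A -> 0 <= B -> 0 < sg -> 0 < g0 <= 1 -> 0 < g1 <= 1 ->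
  0 <= x <= 1 -> m <= a0 -> m <= a1 -> m < 0 -> (1 - x) * x * w = 0 ->
  sg * m <= A * ((1 - g0) * a0 - m) + B * ((1 - g1) * a1 - m) - sg * ((1 - 2 * x) * m + (1 - x) * x * w).
Proof.
  intros HA HB Hs H0 H1 Hx Ha0 Ha1 Hm Q.
  assert (0 <= (1 - g0) * (a0 - m)) by (apply Rmult_le_pos; lra).
  assert (0 <= (1 - g1) * (a1 - m)) by (apply Rmult_le_pos; lra).
  assert (0 <= A * ((1 - g0) * a0 - m)) by (apply Rmult_le_pos; nra).
  assert (0 <= B * ((1 - g1) * a1 - m)) by (apply Rmult_le_pos; nra).
  assert (0 <= sg * (1 - x)) by (apply Rmult_le_pos; lra).
  assert (0 <= - (sg * (1 - x)) * m) by nra.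
  assert (E : sg * ((1 - 2 * x) * m + (1 - x) * x * w) = sg * ((1 - 2 * x) * m)) by (rewrite Q; ring).
  rewrite E. nra.
Qed.

Lemma ar2 A B sg g0 g1 x m a0 a1 w e : 0 <= A -> 0 <= B -> 0 < sg -> 0 < g0 <= 1 -> 0 < g1 <= 1 ->
  0 <= x <= 1 -> a0 <= m -> a1 <= m -> 0 <= m -> (1 - x) * x * w = 0 ->
  sg * (e - m) <= sg * e - (A * ((1 - g0) * a0 - m) + B * ((1 - g1) * a1 - m) - sg * ((1 - 2 * x) * m + (1 - x) * x * w)).
Proof.
  intros HA HB Hs H0 H1 Hx Ha0 Ha1 Hm Q.
  assert (0 <= (1 - g0) * (m - a0)) by (apply Rmult_le_pos; lra).
  assert (0 <= (1 - g1) * (m - a1)) by (apply Rmult_le_pos; lra).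
  assert (A * ((1 - g0) * a0 - m) <= 0) by (apply Rmult_le_0_l_pos; nra).
  assert (B * ((1 - g1) * a1 - m) <= 0) by (apply Rmult_le_0_l_pos; nra).
  assert (0 <= sg * (1 - x)) by (apply Rmult_le_pos; lra).
  assert (0 <= (sg * (1 - x)) * m) by nra.
  assert (E : sg * ((1 - 2 * x) * m + (1 - x) * x * w) = sg * ((1 - 2 * x) * m)) by (rewrite Q; ring).
  rewrite E. nra.
Qed.

Lemma ar3 A B sg g0 g1 x m a0 a1 v q : 0 <= A -> 0 <= B -> 0 < sg -> 0 < g0 <= 1 -> 0 < g1 <= 1 ->
  0 <= x <= 1 -> m <= a0 -> m <= a1 -> m < 0 -> 0 <= v -> (1 - x) * x * q = 0 ->
  2 * sg * m <= A * ((1 - g0) ^ 2 * a0 - m) + B * ((1 - g1) ^ 2 * a1 - m)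
     - sg * (- 2 * v + 2 * (1 - 2 * x) * m + (1 - x) * x * q).
Proof.
  intros HA HB Hs H0 H1 Hx Ha0 Ha1 Hm Hv Q.
  assert (0 <= (1 - g0) ^ 2 * (a0 - m)) by (apply Rmult_le_pos; nra).
  assert (0 <= (1 - g1) ^ 2 * (a1 - m)) by (apply Rmult_le_pos; nra).
  assert ((1 - g0) ^ 2 <= 1) by nra. assert ((1 - g1) ^ 2 <= 1) by nra.
  assert (0 <= A * ((1 - g0) ^ 2 * a0 - m)) by (apply Rmult_le_pos; nra).
  assert (0 <= B * ((1 - g1) ^ 2 * a1 - m)) by (apply Rmult_le_pos; nra).
  assert (0 <= sg * (1 - x)) by (apply Rmult_le_pos; lra).
  assert (0 <= - (sg * (1 - x)) * m) by nra.
  assert (0 <= sg * v) by (apply Rmult_le_pos; lra).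
  assert (E : sg * (- 2 * v + 2 * (1 - 2 * x) * m + (1 - x) * x * q) = sg * (- 2 * v + 2 * (1 - 2 * x) * m)) by (rewrite Q; ring).
  rewrite E. nra.
Qed.

Lemma ar4 A B sg g0 g1 x m a0 a1 v q e1 e3 : 0 <= A -> 0 <= B -> 0 < sg -> 0 < g0 <= 1 -> 0 < g1 <= 1 ->
  0 <= x <= 1 -> a0 <= m -> a1 <= m -> 0 <= m -> v <= e1 -> e1 <= e3 -> (1 - x) * x * q = 0 ->
  2 * sg * (2 * e3 - m) <= 2 * (3 * sg * e3) - (A * ((1 - g0) ^ 2 * a0 - m) + B * ((1 - g1) ^ 2 * a1 - m)
     - sg * (- 2 * v + 2 * (1 - 2 * x) * m + (1 - x) * x * q)).
Proof.
  intros HA HB Hs H0 H1 Hx Ha0 Ha1 Hm Hv He Q.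
  assert (0 <= (1 - g0) ^ 2 * (m - a0)) by (apply Rmult_le_pos; nra).
  assert (0 <= (1 - g1) ^ 2 * (m - a1)) by (apply Rmult_le_pos; nra).
  assert ((1 - g0) ^ 2 <= 1) by nra. assert ((1 - g1) ^ 2 <= 1) by nra.
  assert (A * ((1 - g0) ^ 2 * a0 - m) <= 0) by (apply Rmult_le_0_l_pos; nra).
  assert (B * ((1 - g1) ^ 2 * a1 - m) <= 0) by (apply Rmult_le_0_l_pos; nra).
  assert (0 <= sg * (1 - x)) by (apply Rmult_le_pos; lra).
  assert (0 <= (sg * (1 - x)) * m) by nra.
  assert (sg * v <= sg * e3) by (apply Rmult_le_compat_l; lra).
  assert (E : sg * (- 2 * v + 2 * (1 - 2 * x) * m + (1 - x) * x * q) = sg * (- 2 * v + 2 * (1 - 2 * x) * m)) by (rewrite Q; ring).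
  rewrite E. nra.
Qed.


Lemma sm_dx (u : R -> R -> R) (Hs : smooth2 u) l x t : is_derive (fun y => pderiv l u y t) x (pderiv (true :: l) u x t).
Proof. apply (Derive_correct (fun y => pderiv l u y t)). exact (proj1 (Hs l x t)). Qed.

Lemma sm_dt (u : R -> R -> R) (Hs : smooth2 u) l x t : is_derive (fun s => pderiv l u x s) t (pderiv (false :: l) u x t).
Proof. apply (Derive_correct (fun s => pderiv l u x s)). exact (proj1 (proj2 (Hs l x t))). Qed.

Lemma sm_c2 (u : R -> R -> R) (Hs : smooth2 u) l x t : continuity_2d_pt (pderiv l u) x t.
Proof. apply continuity_2d_pt_filterlim. exact (proj2 (proj2 (Hs l x t))). Qed.

Lemma swap (u : R -> R -> R) (Hs : smooth2 u) l x t : pderiv (false :: true :: l) u x t = pderiv (true :: false :: l) u x t.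
Proof.
  symmetry.
  apply (Schwarz (pderiv l u) x t).
  - exists (mkposreal 1 Rlt_0_1). intros a b _ _.
    split; [exact (proj1 (Hs l a b))|]. split; [exact (proj1 (proj2 (Hs l a b)))|].
    split; [exact (proj1 (Hs (false :: l) a b))| exact (proj1 (proj2 (Hs (true :: l) a b)))].
  - apply (sm_c2 u Hs (true :: false :: l)).
  - apply (sm_c2 u Hs (false :: true :: l)).
Qed.

Lemma lift (u : R -> R -> R) (Hs : smooth2 u) l (E E' : R -> R -> R) :
  (forall x t, 0 <= x <= 1 -> 0 < t -> pderiv (false :: l) u x t = E x t) ->
  (forall x t, is_derive (fun y => E y t) x (E' x t)) ->
  (forall x t, continuous (fun y => E' y t) x) ->
  forall x t, 0 <= x <= 1 -> 0 < t -> pderiv (false :: true :: l) u x t = E' x t.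
Proof.
  intros HE HD HC x t Hx Ht.
  apply (ext_closed (fun y => pderiv (false :: true :: l) u y t) (fun y => E' y t) x Hx).
  - apply c2d_x. apply (sm_c2 u Hs).
  - apply cont1_of. apply HC.
  - intros y Hy. rewrite (swap u Hs).
    change (Derive (fun z => pderiv (false :: l) u z t) y = E' y t).
    rewrite (Derive_ext_loc _ (fun z => E z t)).
    + apply is_derive_unique. apply HD.
    + assert (Hd : 0 < Rmin y (1 - y)) by (apply Rmin_pos; lra).
      exists (mkposreal _ Hd). intros z Hz. apply HE; [|exact Ht].
      change (Rabs (z - y) < Rmin y (1 - y)) in Hz.
      apply Rabs_def2 in Hz.
      pose proof (Rmin_l y (1 - y)). pose proof (Rmin_r y (1 - y)). lra.
Qed.

Local Notation PV u := (pderiv (true :: nil) u).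
Local Notation PW u := (pderiv (true :: true :: nil) u).
Local Notation PX u := (pderiv (true :: true :: true :: nil) u).

Definition PE0 (u : R -> R -> R) (A B sg g0 g1 : R) x t := A * (u (x + g0 * (1 - x)) t - u x t) + B * (u (x - g1 * x) t - u x t)
  - sg * (1 - x) * x * PV u x t.
Definition PE1 (u : R -> R -> R) (A B sg g0 g1 : R) x t := A * ((1 - g0) * PV u (x + g0 * (1 - x)) t - PV u x t)
  + B * ((1 - g1) * PV u (x - g1 * x) t - PV u x t)
  - sg * ((1 - 2 * x) * PV u x t + (1 - x) * x * PW u x t).
Definition PE2 (u : R -> R -> R) (A B sg g0 g1 : R) x t := A * ((1 - g0) ^ 2 * PW u (x + g0 * (1 - x)) t - PW u x t)
  + B * ((1 - g1) ^ 2 * PW u (x - g1 * x) t - PW u x t)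
  - sg * (- 2 * PV u x t + 2 * (1 - 2 * x) * PW u x t + (1 - x) * x * PX u x t).

Ltac exd Hs := repeat split;
  first [ exact (proj1 (Hs nil _ _)) | exact (proj1 (Hs (true :: nil) _ _))
        | exact (proj1 (Hs (true :: true :: nil) _ _))
        | exact (proj1 (Hs (true :: true :: true :: nil) _ _)) ].

Lemma dE0 (u : R -> R -> R) (Hs : smooth2 u) (A B sg g0 g1 : R) x t : is_derive (fun y => PE0 u A B sg g0 g1 y t) x (PE1 u A B sg g0 g1 x t).
Proof.
  unfold PE0, PE1. auto_derive. exd Hs. cbn [pderiv]. unfold Rminus. ring.
Qed.

Lemma dE1 (u : R -> R -> R) (Hs : smooth2 u) (A B sg g0 g1 : R) x t : is_derive (fun y => PE1 u A B sg g0 g1 y t) x (PE2 u A B sg g0 g1 x t).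
Proof.
  unfold PE1, PE2. auto_derive. exd Hs. cbn [pderiv]. unfold Rminus. ring.
Qed.

Lemma cE1 (u : R -> R -> R) (Hs : smooth2 u) (A B sg g0 g1 : R) x t : continuous (fun y => PE1 u A B sg g0 g1 y t) x.
Proof. apply (ex_derive_continuous (fun y => PE1 u A B sg g0 g1 y t)). eexists. apply (dE1 u Hs). Qed.

Lemma cE2 (u : R -> R -> R) (Hs : smooth2 u) (A B sg g0 g1 : R) x t : continuous (fun y => PE2 u A B sg g0 g1 y t) x.
Proof. apply (ex_derive_continuous (fun y => PE2 u A B sg g0 g1 y t)). unfold PE2. auto_derive. exd Hs. Qed.

Lemma cpt_of_der g g' y : (forall y, is_derive g y (g' y)) -> continuity_pt g y.
Proof.
  intros H. apply (proj2 (continuity_pt_filterlim _ _)).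
  apply (ex_derive_continuous g). eexists. apply H.
Qed.

Lemma convex_from (g g' g'' : R -> R) :
  (forall y, is_derive g y (g' y)) -> (forall y, is_derive g' y (g'' y)) ->
  (forall y, 0 <= y <= 1 -> 0 <= g'' y) -> convex_on01 g.
Proof.
  intros H1 H2 H3.
  assert (Hmono : forall p q, 0 <= p -> p <= q -> q <= 1 -> g' p <= g' q).
  { intros p q Hp Hpq Hq.
    destruct (MVT_gen g' p q g'') as [c [Hc Hm]].
    - intros; apply H2.
    - intros; apply (cpt_of_der g' g''); auto.
    - rewrite Rmin_left in Hc by lra. rewrite Rmax_right in Hc by lra.
      assert (0 <= g'' c * (q - p)) by (apply Rmult_le_pos; [apply H3; lra|lra]). lra. }
  assert (Hle : forall x y a, 0 <= x -> x <= y -> y <= 1 -> 0 <= a <= 1 ->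
     g (a * x + (1 - a) * y) <= a * g x + (1 - a) * g y).
  { intros x y a Hx Hxy Hy Ha.
    set (z := a * x + (1 - a) * y).
    assert (Hz : x <= z <= y) by (unfold z; nra).
    destruct (MVT_gen g x z g') as [c1 [Hc1 Hm1]].
    - intros; apply H1.
    - intros; apply (cpt_of_der g g'); auto.
    - destruct (MVT_gen g z y g') as [c2 [Hc2 Hm2]].
      + intros; apply H1.
      + intros; apply (cpt_of_der g g'); auto.
      + rewrite Rmin_left in Hc1, Hc2 by lra. rewrite Rmax_right in Hc1, Hc2 by lra.
        assert (Hg : g' c1 <= g' c2) by (apply Hmono; lra).
        assert (Id : a * g x + (1 - a) * g y - g z = a * (1 - a) * (y - x) * (g' c2 - g' c1)).
        { transitivity (- a * (g z - g x) + (1 - a) * (g y - g z)); [ring|].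
          rewrite Hm1, Hm2. unfold z. ring. }
        assert (0 <= a * (1 - a) * (y - x) * (g' c2 - g' c1)).
        { repeat apply Rmult_le_pos; lra. }
        lra. }
  intros x y a Hx Hy Ha.
  destruct (Rle_dec x y) as [r|r].
  - apply Hle; lra.
  - specialize (Hle y x (1 - a) ltac:(lra) ltac:(lra) ltac:(lra) ltac:(lra)).
    replace (1 - (1 - a)) with a in Hle by ring.
    replace (a * x + (1 - a) * y) with ((1 - a) * y + a * x) by ring. lra.
Qed.

Lemma loc01 (P : R -> Prop) y : 0 < y < 1 -> (forall z, 0 <= z <= 1 -> P z) -> locally y P.
Proof.
  intros Hy H.
  assert (Hd : 0 < Rmin y (1 - y)) by (apply Rmin_pos; lra).
  exists (mkposreal _ Hd). intros z Hz. apply H.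
  change (Rabs (z - y) < Rmin y (1 - y)) in Hz.
  apply Rabs_def2 in Hz.
  pose proof (Rmin_l y (1 - y)). pose proof (Rmin_r y (1 - y)). lra.
Qed.

Lemma cont1_const c x : mycont1 (fun _ => c) x.
Proof. intros e He. exists 1. split; [lra|]. intros. replace (c - c) with 0 by ring. rewrite Rabs_R0. exact He. Qed.

Theorem lemma4p3 (f0 f1 l0 l1 g0 g1 : R) (u : R -> R -> R)
  (Hf0 : 0 < f0) (Hf1 : 0 <= f1) (Hsig : 0 < f0 - f1)
  (Hl0 : 0 <= l0) (Hl1 : 0 <= l1)
  (Hg0 : 0 < g0 <= 1) (Hg1 : 0 < g1 <= 1)
  (Hsmooth : smooth2 u)
  (Hsol : solves_cauchy f0 f1 l0 l1 g0 g1 u) :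
  (forall t, 0 < t -> convex_on01 (fun x => u x t)) /\
  (exists c mu, 0 < c /\
     forall x t, 0 <= x <= 1 -> 0 < t ->
       0 <= Derive_n (fun y => u y t) 2 x <= c * exp (mu * t)).
Proof.
  set (sg := f0 - f1). set (A := l0 * f0). set (B := l1 * f1).
  assert (HA : 0 <= A) by (apply Rmult_le_pos; lra).
  assert (HB : 0 <= B) by (apply Rmult_le_pos; lra).
  destruct Hsol as [Heq Hinit].
  set (V := pderiv (true :: nil) u). set (W := pderiv (true :: true :: nil) u).
  assert (eq0 : forall x t, 0 <= x <= 1 -> 0 < t ->
            pderiv (false :: nil) u x t = PE0 u A B sg g0 g1 x t).
  { intros x t Hx Ht. specialize (Heq x t Hx Ht). unfold J0, J1 in Heq.
    unfold PE0. cbn [pderiv]. unfold A, B, sg. lra. }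
  pose proof (lift u Hsmooth nil _ _ eq0 (dE0 u Hsmooth A B sg g0 g1) (cE1 u Hsmooth A B sg g0 g1)) as eq1.
  pose proof (lift u Hsmooth (true :: nil) _ _ eq1 (dE1 u Hsmooth A B sg g0 g1) (cE2 u Hsmooth A B sg g0 g1)) as eq2.
  clear eq0.
  assert (iv : forall x, 0 <= x <= 1 -> V x 0 = 1).
  { intros x Hx. apply (ext_closed (fun y => V y 0) (fun _ => 1) x Hx).
    - apply c2d_x. apply (sm_c2 u Hsmooth).
    - apply cont1_const.
    - intros y Hy. unfold V. cbn [pderiv].
      rewrite (Derive_ext_loc _ (fun z => z)). apply Derive_id.
      apply loc01; auto. }
  assert (iw : forall x, 0 <= x <= 1 -> W x 0 = 0).
  { intros x Hx. apply (ext_closed (fun y => W y 0) (fun _ => 0) x Hx).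
    - apply c2d_x. apply (sm_c2 u Hsmooth).
    - apply cont1_const.
    - intros y Hy. unfold W. change (Derive (fun z => V z 0) y = 0).
      rewrite (Derive_ext_loc _ (fun z => 1)). apply Derive_const.
      apply loc01; auto. }
  assert (Hp : forall x, 0 <= x <= 1 -> 0 <= x + g0 * (1 - x) <= 1 /\ 0 <= x - g1 * x <= 1).
  { intros x Hx. split; nra. }
  assert (Hsg : 0 < sg) by exact Hsig.
  assert (vpos : forall x t, 0 <= x <= 1 -> 0 <= t -> 0 <= V x t).
  { apply (posprin V sg); [lra| intros; apply (sm_c2 u Hsmooth) | intros x Hx; rewrite iv; lra |].
    intros x t Hx Ht Hmin Hneg. exists (PE1 u A B sg g0 g1 x t). split.
    - rewrite <- (eq1 x t Hx Ht). exact (sm_dt u Hsmooth (true :: nil) x t).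
    - pose proof (min_factor (fun y => V y t) x (W x t) Hx (sm_dx u Hsmooth (true :: nil) x t) Hmin) as Q.
      destruct (Hp x Hx) as [Hp0 Hp1].
      pose proof (Hmin _ Hp0). pose proof (Hmin _ Hp1).
      unfold PE1. apply ar1; auto. }
  assert (vup : forall x t, 0 <= x <= 1 -> 0 <= t -> 0 <= exp (sg * t) - V x t).
  { apply (posprin (fun x t => exp (sg * t) - V x t) sg); [lra| | |].
    - intros x t. apply continuity_2d_pt_minus; [|apply (sm_c2 u Hsmooth)].
      apply (continuity_2d_pt_ext (fun _ s => 1 * exp (sg * s))); [intros; ring|apply cont_exp_2d].
    - intros x Hx; rewrite iv, Rmult_0_r, exp_0; lra.
    - intros x t Hx Ht Hmin Hneg. exists (sg * exp (sg * t) - PE1 u A B sg g0 g1 x t). split.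
      + rewrite <- (eq1 x t Hx Ht).
        assert (He : is_derive (fun s => exp (sg * s)) t (sg * exp (sg * t))) by (auto_derive; [auto|ring]).
        exact (is_derive_minus _ _ _ _ _ He (sm_dt u Hsmooth (true :: nil) x t)).
      + assert (Hd : is_derive (fun y => exp (sg * t) - V y t) x (0 - W x t)).
        { exact (is_derive_minus _ _ _ _ _ (is_derive_const (exp (sg * t)) x) (sm_dx u Hsmooth (true :: nil) x t)). }
        pose proof (min_factor (fun y => exp (sg * t) - V y t) x _ Hx Hd Hmin) as Q0.
        assert (Q : (1 - x) * x * W x t = 0).
        { replace ((1 - x) * x * W x t) with (- ((1 - x) * x * (0 - W x t))) by ring. rewrite Q0. ring. }
        destruct (Hp x Hx) as [Hp0 Hp1].
        pose proof (Hmin _ Hp0). pose proof (Hmin _ Hp1). cbv beta in *.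
        pose proof (vpos x t Hx ltac:(lra)).
        unfold PE1, V, W in *. apply ar2; auto; lra. }
  assert (wpos : forall x t, 0 <= x <= 1 -> 0 <= t -> 0 <= W x t).
  { apply (posprin W (2 * sg)); [lra| intros; apply (sm_c2 u Hsmooth) | intros x Hx; rewrite iw; lra |].
    intros x t Hx Ht Hmin Hneg. exists (PE2 u A B sg g0 g1 x t). split.
    - rewrite <- (eq2 x t Hx Ht). exact (sm_dt u Hsmooth (true :: true :: nil) x t).
    - pose proof (min_factor (fun y => W y t) x _ Hx (sm_dx u Hsmooth (true :: true :: nil) x t) Hmin) as Q.
      destruct (Hp x Hx) as [Hp0 Hp1].
      pose proof (Hmin _ Hp0). pose proof (Hmin _ Hp1).
      pose proof (vpos x t Hx ltac:(lra)).
      unfold PE2. apply ar3; auto. }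
  assert (wup : forall x t, 0 <= x <= 1 -> 0 <= t -> 0 <= 2 * exp (3 * sg * t) - W x t).
  { apply (posprin (fun x t => 2 * exp (3 * sg * t) - W x t) (2 * sg)); [lra| | |].
    - intros x t. apply continuity_2d_pt_minus; [apply cont_exp_2d|apply (sm_c2 u Hsmooth)].
    - intros x Hx; rewrite iw, Rmult_0_r, exp_0; lra.
    - intros x t Hx Ht Hmin Hneg. exists (2 * (3 * sg * exp (3 * sg * t)) - PE2 u A B sg g0 g1 x t). split.
      + rewrite <- (eq2 x t Hx Ht).
        assert (He : is_derive (fun s => 2 * exp (3 * sg * s)) t (2 * (3 * sg * exp (3 * sg * t)))) by (auto_derive; [auto|ring]).
        exact (is_derive_minus _ _ _ _ _ He (sm_dt u Hsmooth (true :: true :: nil) x t)).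
      + assert (Hd : is_derive (fun y => 2 * exp (3 * sg * t) - W y t) x (0 - pderiv (true :: true :: true :: nil) u x t)).
        { exact (is_derive_minus _ _ _ _ _ (is_derive_const (2 * exp (3 * sg * t)) x) (sm_dx u Hsmooth (true :: true :: nil) x t)). }
        pose proof (min_factor (fun y => 2 * exp (3 * sg * t) - W y t) x _ Hx Hd Hmin) as Q0.
        assert (Q : (1 - x) * x * pderiv (true :: true :: true :: nil) u x t = 0).
        { replace ((1 - x) * x * pderiv (true :: true :: true :: nil) u x t) with (- ((1 - x) * x * (0 - pderiv (true :: true :: true :: nil) u x t))) by ring. rewrite Q0. ring. }
        destruct (Hp x Hx) as [Hp0 Hp1].
        pose proof (Hmin _ Hp0). pose proof (Hmin _ Hp1). cbv beta in *.
        pose proof (wpos x t Hx ltac:(lra)).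
        pose proof (vup x t Hx ltac:(lra)).
        assert (exp (sg * t) <= exp (3 * sg * t)).
        { destruct (Rle_lt_or_eq_dec (sg * t) (3 * sg * t)) as [h|h]; [nra|left; apply exp_increasing; exact h|right; rewrite h; reflexivity]. }
        unfold PE2, V, W in *. apply (ar4 _ _ _ _ _ _ _ _ _ _ _ (exp (sg * t))); auto; lra. }
  split.
  - intros t Ht. apply (convex_from _ (fun y => V y t) (fun y => W y t)).
    + intros y. exact (sm_dx u Hsmooth nil y t).
    + intros y. exact (sm_dx u Hsmooth (true :: nil) y t).
    + intros y Hy. apply wpos; lra.
  - exists 2, (3 * sg). split; [lra|]. intros x t Hx Ht.
    change (Derive_n (fun y => u y t) 2 x) with (W x t).
    split; [apply wpos; lra|]. pose proof (wup x t Hx ltac:(lra)). lra.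
Qed.
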